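(* Let $a=\{a_1,\ldots,a_n\}$ be a list of positive integers and for $\epsilon\in\mathbb{R}$ let $$q^h_{a,\epsilon}(x):=\sum_i x_i^4+\Big(\big(\sum_i a_ix_i\big)^2-2\sum_i x_i^2\Big)\Big(\frac1n\sum_i x_i^2\Big)+(n-\epsilon)\Big(\frac1n\sum_i x_i^2\Big)^2 .$$ Then the linear program $\max_{\epsilon\in\mathbb{R}}\{\epsilon : q^h_{a,\epsilon} \text{ is dsos}\}$ is feasible, i.e., there exists $\epsilon\in\mathbb{R}$ such that $q^h_{a,\epsilon}$ is dsos.
   Context: Let $z(x,2)$ be the vector of all monomials of degree exactly $2$ in $x=(x_1,\ldots,x_n)$. A quartic form $p$ is dsos (diagonally-dominant-sum-of-squares) if $p(x)=z(x,2)^TQz(x,2)$ for some symmetric diagonally dominant matrix $Q$, where a symmetric matrix $Q$ is diagonally dominant if $q_{ii}\ge\sum_{j\ne i}|q_{ij}|$ for all $i$. *)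

(* Defs.v *)
From HB Require Import structures.
From mathcomp Require Import all_boot all_order all_algebra.
From mathcomp Require Import reals.
Set Implicit Arguments. Unset Strict Implicit. Unset Printing Implicit Defensive.
Import Order.TTheory GRing.Theory Num.Theory.
Local Open Scope ring_scope.

(* Index type of the monomials of degree exactly 2 in n variables:
   the pairs (i, j) with i <= j, standing for x_i * x_j. *)
Definition mon2 (n : nat) := {p : 'I_n * 'I_n | (p.1 <= p.2)%N}.

Definition z2 {R : realType} {n : nat} (x : 'I_n -> R) (m : mon2 n) : R :=
  x (sval m).1 * x (sval m).2.

Definition symmetric_mx {R : realType} {n : nat} (Q : mon2 n -> mon2 n -> R) :=
  forall i j, Q i j = Q j i.

Definition diag_dominant {R : realType} {n : nat} (Q : mon2 n -> mon2 n -> R) :=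
  forall i, \sum_(j | j != i) `|Q i j| <= Q i i.

Definition dsos {R : realType} {n : nat} (p : ('I_n -> R) -> R) : Prop :=
  exists Q : mon2 n -> mon2 n -> R,
    symmetric_mx Q /\ diag_dominant Q /\
    forall x, p x = \sum_(i : mon2 n) \sum_(j : mon2 n) z2 x i * Q i j * z2 x j.

Definition qh {R : realType} {n : nat} (a : 'I_n -> nat) (eps : R)
  (x : 'I_n -> R) : R :=
  let s2 := \sum_i x i ^+ 2 in
  \sum_i x i ^+ 4
  + ((\sum_i (a i)%:R * x i) ^+ 2 - 2 * s2) * (s2 / n%:R)
  + (n%:R - eps) * (s2 / n%:R) ^+ 2.

(* Main.v *)
Require Import Defs.
From HB Require Import structures.
From mathcomp Require Import all_boot all_order all_algebra.
From mathcomp Require Import reals.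
From mathcomp Require Import ring lra.
Import Order.TTheory GRing.Theory Num.Theory.
Local Open Scope ring_scope.

Section S.
Context {R : realType}.

Lemma sum_mon2 n (G : 'I_n * 'I_n -> R) :
  \sum_(p : 'I_n * 'I_n | (p.1 <= p.2)%N) G p = \sum_(m : mon2 n) G (sval m).
Proof.
rewrite (reindex_omap (sval : mon2 n -> _) insub); last first.
  by move=> i Pi; rewrite insubT.
by apply: eq_bigl=> -[i iA]/=; rewrite insubT ?iA /= eqxx.
Qed.

Lemma sum_pairs n (F : 'I_n -> 'I_n -> R) :
  \sum_i \sum_j F i j = \sum_(m : mon2 n)
     (F (sval m).1 (sval m).2 + (if (sval m).1 != (sval m).2 then F (sval m).2 (sval m).1 else 0)).
Proof.
rewrite pair_bigA /= (bigID (fun p : 'I_n * 'I_n => (p.1 <= p.2)%N)) /=.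
rewrite big_split /= -(@sum_mon2 n (fun p : 'I_n * 'I_n => F p.1 p.2)); congr (_ + _).
rewrite -(@sum_mon2 n (fun p : 'I_n * 'I_n => if p.1 != p.2 then F p.2 p.1 else 0)).
rewrite (reindex_inj (h := fun p : 'I_n * 'I_n => (p.2, p.1))); last first.
  by move=> [a b] [c d] /= [-> ->].
rewrite /= [RHS]big_mkcond /= [LHS]big_mkcond /=; apply: eq_bigr => -[i j] _ /=.
rewrite -ltnNge ltn_neqAle.
by case: (i <= j)%N; rewrite ?andbT ?andbF.
Qed.

Definition w n (a : 'I_n -> nat) (i : 'I_n) (m : mon2 n) : R :=
  (if (sval m).1 == i then (a (sval m).2)%:R else 0) +
  (if ((sval m).1 != (sval m).2) && ((sval m).2 == i) then (a (sval m).1)%:R else 0).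

Arguments w {n}.
Lemma w_ge0 n a i m : 0 <= @w n a i m.
Proof. by rewrite /w; apply: addr_ge0; case: ifP. Qed.

Lemma L1 n (a : 'I_n -> nat) (x : 'I_n -> R) i :
  \sum_m z2 x m * w a i m = x i * \sum_k (a k)%:R * x k.
Proof.
have -> : x i * \sum_k (a k)%:R * x k =
  \sum_p \sum_q (if p == i then (a q)%:R * (x p * x q) else 0).
  rewrite [RHS](bigD1 i) //= eqxx [X in _ + X]big1 ?addr0; last by move=> p /negbTE -> ; rewrite big1.
  by rewrite mulr_sumr; apply: eq_bigr => k _; ring.
rewrite sum_pairs; apply: eq_bigr => -[[p q] hpq] _; rewrite /z2 /w /=.
case: (p =P i) => [->|hpi]; case: (q =P i) => [->|hqi]; rewrite ?eqxx ?andbF ?andbT /=;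
  try (case: ifP => _); ring.
Qed.

Lemma L2 n (x : 'I_n -> R) (c : R) :
  \sum_m z2 x m ^+ 2 * ((if (sval m).1 == (sval m).2 then 1 else 0) +
      c * (1 + (if (sval m).1 != (sval m).2 then 1 else 0)))
  = \sum_i x i ^+ 4 + c * (\sum_i x i ^+ 2) ^+ 2.
Proof.
have -> : \sum_i x i ^+ 4 + c * (\sum_i x i ^+ 2) ^+ 2 =
  \sum_p \sum_q ((if p == q then x p ^+ 2 * x q ^+ 2 else 0) + c * (x p ^+ 2 * x q ^+ 2)).
  rewrite [(\sum_i x i ^+ 2) ^+ 2]expr2 mulr_suml mulr_sumr -big_split /=; apply: eq_bigr => p _.
  rewrite big_split /= !mulr_sumr; congr (_ + _).
    rewrite [RHS](bigD1 p) //= eqxx [X in _ + X]big1 ?addr0; first ring.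
    by move=> q /negbTE; rewrite eq_sym => ->.
  all: try (apply: eq_bigr => q _; ring).
rewrite sum_pairs; apply: eq_bigr => -[[p q] hpq] _; rewrite /z2 /=.
case: (p =P q) => [->|hne]; rewrite ?eqxx /=; first ring.
have h2 : (q == p) = false by apply/eqP => h; apply: hne.
rewrite h2 /=; ring.
Qed.
End S.
Arguments w {R n}.

Lemma addle {R : realType} (x y : R) : 0 <= y -> x <= x + y.
Proof. by rewrite lerDl. Qed.

Lemma term_le {R : realType} (I : finType) (F : I -> R) (i : I) :
  (forall j, 0 <= F j) -> F i <= \sum_j F j.
Proof.
move=> h; rewrite (bigD1 i) //=; apply: addle; exact: sumr_ge0.
Qed.

Theorem theorem5p4 (R : realType) (n : nat) (a : 'I_n -> nat)
  (ha : forall i, (0 < a i)%N) :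
  exists eps : R, dsos (qh a eps).
Proof.
pose B := fun m m' : mon2 n => (\sum_i w a i m * w a i m') / (n%:R : R).
pose T := \sum_m \sum_m' B m m'.
pose c := T + 1.
pose D := fun m : mon2 n => (if (sval m).1 == (sval m).2 then 1 else 0) +
      c * (1 + (if (sval m).1 != (sval m).2 then 1 else 0)).
exists (n%:R - n%:R ^+ 2 * c - 2 * n%:R).
exists (fun m m' => B m m' + (if m == m' then D m else 0)).
have B_ge0 : forall m m', 0 <= B m m'.
  move=> m m'; apply: divr_ge0 => //; apply: sumr_ge0 => i _.
  by apply: mulr_ge0; apply: w_ge0.
have T_ge0 : 0 <= T by apply: sumr_ge0 => m _; apply: sumr_ge0.
split; [|split].
- move=> m m'; congr (_ + _).
    by rewrite /B; congr (_ / _); apply: eq_bigr => i _; rewrite mulrC.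
  by rewrite eq_sym; case: eqP => // ->.
- move=> m.
  apply: (@le_trans _ _ T).
  + have -> : \sum_(j | j != m) `|B m j + (if m == j then D m else 0)| =
              \sum_(j | j != m) B m j.
      by apply: eq_bigr => j hj; rewrite eq_sym (negbTE hj) addr0 ger0_norm.
    apply: (@le_trans _ _ (\sum_j B m j)).
      rewrite big_mkcond /=; apply: ler_sum => j _; case: ifP => //.
    rewrite /T; have H := (@term_le R (mon2 n) (fun m0 => \sum_m' B m0 m') m).
    apply: H => m0.
    by apply: sumr_ge0.
  + rewrite eqxx; apply: (@le_trans _ _ (D m)); last by rewrite lerDr.
    rewrite /D /c; case: ((sval m).1 == (sval m).2) => /=; nra.
- move=> x.
  pose L := \sum_k (a k)%:R * x k.
  pose s := \sum_i x i ^+ 2.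
  have HQ : \sum_m \sum_m' z2 x m * (B m m' + (if m == m' then D m else 0)) * z2 x m'
     = (\sum_i (x i * L) ^+ 2) / n%:R + \sum_m z2 x m ^+ 2 * D m.
    transitivity (\sum_m \sum_m' z2 x m * B m m' * z2 x m' + \sum_m z2 x m ^+ 2 * D m).
      rewrite -big_split; apply: eq_bigr => m _ /=.
      rewrite [LHS](bigD1 m) //= [X in _ = X + _](bigD1 m) //= eqxx.
      have -> : \sum_(m' | m' != m) z2 x m * (B m m' + (if m == m' then D m else 0)) * z2 x m'
         = \sum_(m' | m' != m) z2 x m * B m m' * z2 x m'.
        by apply: eq_bigr => m' hm'; rewrite eq_sym (negbTE hm') addr0.
      ring.
    congr (_ + _).
    have -> : \sum_i (x i * L) ^+ 2 = \sum_i (\sum_m z2 x m * w a i m) ^+ 2.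
      by apply: eq_bigr => i _; rewrite L1.
    rewrite mulr_suml.
    transitivity (\sum_m \sum_m' \sum_i z2 x m * w a i m * (z2 x m' * w a i m') / n%:R).
      apply: eq_bigr => m _; apply: eq_bigr => m' _.
      rewrite /B mulr_suml mulr_sumr mulr_suml; apply: eq_bigr => i _; ring.
    under eq_bigr do rewrite exchange_big.
    rewrite exchange_big; apply: eq_bigr => i _.
    rewrite expr2 -mulrA mulr_suml; apply: eq_bigr => m _.
    rewrite mulr_suml mulr_sumr; apply: eq_bigr => m' _; ring.
  rewrite HQ L2 /qh -/s -/L.
  have -> : \sum_i (x i * L) ^+ 2 = L ^+ 2 * s.
    by rewrite /s mulr_sumr; apply: eq_bigr => i _; ring.
  case: (posnP n) => [n0|npos].
    have s0 : s = 0.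
      by rewrite /s big1 // => i _; have := ltn_ord i; rewrite {2}n0.
    rewrite s0; ring.
  have hn : (n%:R : R) != 0 by rewrite pnatr_eq0 -lt0n.
  by field.
Qed.
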